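(* Let $n\ge 6$ with $n=3k$ for an integer $k$. Then $2k<\beta(H(n+1))<\beta(H(n+2))\le 2(k+1)$.
   Context: For $n\ge 5$, $H(n)$ is the graph with vertex set $V_1\cup V_2$, where $V_1=\{v_1,\dots,v_n\}$ and $V_2=\{v_iv_j: 1\le i<j\le n\}$ (each $v_iv_j$ a single vertex), and where $v_r\in V_1$ is adjacent to $v_iv_j\in V_2$ iff $r=i$ or $r=j$; there are no other edges. $d(u,v)$ is the shortest-path distance. A set $Q$ of vertices is a resolving set of a graph $G$ if any two distinct vertices $x,y$ satisfy $(d(x,q))_{q\in Q}\neq(d(y,q))_{q\in Q}$; $\beta(G)$ (the metric dimension) is the minimum size of a resolving set of $G$. *)

(* Defs.v *)
From mathcomp Require Import all_boot.
Set Implicit Arguments. Unset Strict Implicit. Unset Printing Implicit Defensive.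

Definition walk_of_len (T : finType) (e : rel T) (k : nat) (x y : T) : bool :=
  [exists p : k.-tuple T, path e x p && (last x p == y)].

(* shortest-path distance: least k with a walk of length k from x to y
   (shortest walk = shortest path).  For connected graphs (all used here)
   such a k < #|T| exists; otherwise the value is #|T| (unused). *)
Definition gdist (T : finType) (e : rel T) (x y : T) : nat :=
  find (fun k => walk_of_len e k x y) (iota 0 #|T|).

Definition resolving (T : finType) (e : rel T) (Q : {set T}) : bool :=
  [forall x, forall y, (x != y) ==> [exists q in Q, gdist e x q != gdist e y q]].

(* metric dimension: least size of a resolving set ([set: T] always resolves) *)
Definition metric_dim (T : finType) (e : rel T) : nat :=
  find (fun k => [exists Q : {set T}, resolving e Q && (#|Q| == k)]) (iota 0 #|T|.+1).

(* V1 = 'I_n (vertex v_r is inl r), V2 = 2-element subsets {i,j} of 'I_n (inr {i,j}) *)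
Definition isHv (n : nat) (x : 'I_n + {set 'I_n}) : bool :=
  match x with inl _ => true | inr A => #|A| == 2 end.

Definition Hv (n : nat) := {x : 'I_n + {set 'I_n} | isHv x}.

Definition Hadj (n : nat) : rel (Hv n) := fun u v =>
  match val u, val v with
  | inl r, inr A => r \in A
  | inr A, inl r => r \in A
  | _, _ => false
  end.

Definition betaH (n : nat) : nat := metric_dim (@Hadj n).

(* Main.v *)
Require Import Defs.
From mathcomp Require Import all_boot zify.
Set Implicit Arguments. Unset Strict Implicit. Unset Printing Implicit Defensive.

Lemma walk0 (T : finType) (e : rel T) x y : walk_of_len e 0 x y = (x == y).
Proof.
apply/existsP/idP => [[p]|/eqP->]; first by rewrite (tuple0 p) /=.
by exists [tuple]; rewrite /= eqxx.
Qed.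

Lemma walkS (T : finType) (e : rel T) k x y :
  walk_of_len e k.+1 x y = [exists z, e x z && walk_of_len e k z y].
Proof.
apply/existsP/existsP => [[p]|[z /andP[exz /existsP[p Hp]]]].
  case/tupleP: p => z p /=; case/andP => /andP[exz pz] ly.
  by exists z; rewrite exz; apply/existsP; exists p; rewrite pz.
by exists [tuple of z :: p]; rewrite /= exz.
Qed.

Lemma walk1 (T : finType) (e : rel T) x y : walk_of_len e 1 x y = e x y.
Proof.
rewrite walkS; apply/existsP/idP => [[z /andP[h]]|h].
  by rewrite walk0 => /eqP <-.
by exists y; rewrite h walk0 eqxx.
Qed.

Lemma find_iota_eq (P : pred nat) N d : d < N -> P d ->
  (forall i, i < d -> ~~ P i) -> find P (iota 0 N) = d.
Proof.
move=> dN Pd H; rewrite -(subnKC (ltnW dN)) iotaD find_cat.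
have -> : has P (iota 0 d) = false.
  by apply/hasPn => i; rewrite mem_iota add0n => /andP[_ /H].
rewrite size_iota add0n.
case E: (N - d) => [|m]; first by lia.
by rewrite /= Pd addn0.
Qed.

Lemma gdist_char (T : finType) (e : rel T) x y d : d < #|T| ->
  walk_of_len e d x y -> (forall i, i < d -> ~~ walk_of_len e i x y) ->
  gdist e x y = d.
Proof. by move=> *; apply: find_iota_eq. Qed.

Definition vL n (r : 'I_n) : Hv n := exist _ (inl r) isT.
Definition vR n (A : {set 'I_n}) (h : #|A| == 2) : Hv n := exist _ (inr A) h.
Definition isR n (v : Hv n) : bool := if val v is inr _ then true else false.

Lemma Hadj_side n (u v : Hv n) : Hadj u v -> isR u = ~~ isR v.
Proof. by case: u => [[r|A] hu]; case: v => [[s|B] hv]. Qed.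

Lemma walk_par n k (x y : Hv n) : walk_of_len (@Hadj n) k x y -> isR x (+) isR y = odd k.
Proof.
elim: k x => [|k IH] x; first by rewrite walk0 => /eqP->; rewrite addbb.
rewrite walkS => /existsP[z /andP[/Hadj_side h /IH]].
by rewrite h /=; case: (isR z); case: (isR y); case: (odd k).
Qed.

Definition D n (u v : Hv n) : nat :=
  match val u, val v with
  | inl r, inl s => if r == s then 0 else 2
  | inl r, inr B => if r \in B then 1 else 3
  | inr A, inl s => if s \in A then 1 else 3
  | inr A, inr B => if A == B then 0 else
                    if [exists c, (c \in A) && (c \in B)] then 2 else 4
  end.

Lemma vL_inj n : injective (@vL n).
Proof. by move=> r s /(congr1 val) [->]. Qed.

Lemma card_Hv n : n <= #|{: Hv n}|.
Proof.
have := max_card [set vL r | r in 'I_n].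
by rewrite card_imset ?card_ord //; apply: vL_inj.
Qed.

Lemma pair_card n (r s : 'I_n) : r != s -> #|[set r; s]| == 2.
Proof. by rewrite cards2 => ->. Qed.

Lemma nopar n k (x y : Hv n) : isR x (+) isR y != odd k -> ~~ walk_of_len (@Hadj n) k x y.
Proof. by move=> h; apply/negP => /walk_par; apply/eqP. Qed.

Lemma gdist_charH n (x y : Hv n) d : 5 <= n -> d < 5 ->
  walk_of_len (@Hadj n) d x y -> (forall i, i < d -> ~~ walk_of_len (@Hadj n) i x y) ->
  gdist (@Hadj n) x y = d.
Proof.
move=> n5 d5 W H; apply: gdist_char => //.
exact: (leq_trans d5 (leq_trans n5 (card_Hv n))).
Qed.

Lemma gdistE n (u v : Hv n) : 5 <= n -> gdist (@Hadj n) u v = D u v.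
Proof.
move=> n5.
have W0 : forall x y : Hv n, x != y -> ~~ walk_of_len (@Hadj n) 0 x y.
  by move=> x y; rewrite walk0.
case: u => [[r|A] hu]; case: v => [[s|B] hv]; rewrite /D /=.
- case: eqP => [rs|rs].
    apply: (@gdist_charH n _ _ _ n5) => //; by rewrite walk0; subst; apply/eqP/val_inj.
  have rs' : r != s by apply/eqP.
  apply: (@gdist_charH n _ _ _ n5) => //.
    rewrite walkS; apply/existsP; exists (vR (pair_card rs')).
    rewrite /Hadj /= in_set2 eqxx /= walk1 /Hadj /= in_set2 eqxx orbT //.
  move=> [|[|i]] // _; last by apply: nopar.
  by apply: W0; apply/eqP => -[].
- case: ifP => rB.
    apply: (@gdist_charH n _ _ _ n5) => //; first by rewrite walk1.
    by move=> [|i] // _; apply: nopar.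
  apply: (@gdist_charH n _ _ _ n5) => //.
    have : 0 < #|B| by rewrite (eqP hv).
    case/card_gt0P => a aB.
    have ra : r != a by apply: contraFN rB => /eqP->.
    rewrite walkS; apply/existsP; exists (vR (pair_card ra)).
    rewrite /Hadj /= in_set2 eqxx /= walkS; apply/existsP; exists (vL a).
    by rewrite /Hadj /= in_set2 eqxx orbT walk1 /Hadj /=.
  move=> [|[|[|i]]] // _; try by apply: nopar.
  by rewrite walk1 /Hadj /= rB.
- case: ifP => sA.
    apply: (@gdist_charH n _ _ _ n5) => //; first by rewrite walk1.
    by move=> [|i] // _; apply: nopar.
  apply: (@gdist_charH n _ _ _ n5) => //.
    have : 0 < #|A| by rewrite (eqP hu).
    case/card_gt0P => a aA.
    have sa : a != s by apply: contraFN sA => /eqP<-.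
    rewrite walkS; apply/existsP; exists (vL a).
    rewrite /Hadj /= aA walkS; apply/existsP; exists (vR (pair_card sa)).
    by rewrite /Hadj /= in_set2 eqxx walk1 /Hadj /= in_set2 eqxx orbT.
  move=> [|[|[|i]]] // _; try by apply: nopar.
  by rewrite walk1 /Hadj /= sA.
- case: eqP => [AB|AB].
    apply: (@gdist_charH n _ _ _ n5) => //; by rewrite walk0; subst; apply/eqP/val_inj.
  have W0' : ~~ walk_of_len (@Hadj n) 0 (exist _ (inr A) hu) (exist _ (inr B) hv).
    by apply: W0; apply/eqP => -[].
  case: ifP => [/existsP[c /andP[cA cB]]|dis].
    apply: (@gdist_charH n _ _ _ n5) => //.
      rewrite walkS; apply/existsP; exists (vL c).
      by rewrite /Hadj /= cA walk1 /Hadj /=.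
    by move=> [|[|i]] // _; apply: nopar.
  apply: (@gdist_charH n _ _ _ n5) => //.
    have : 0 < #|A| by rewrite (eqP hu).
    case/card_gt0P => a aA.
    have : 0 < #|B| by rewrite (eqP hv).
    case/card_gt0P => b bB.
    have ab : a != b.
      apply/eqP => eab; move/negbT/existsPn: dis => /(_ a).
      by rewrite aA eab bB.
    rewrite walkS; apply/existsP; exists (vL a).
    rewrite /Hadj /= aA walkS; apply/existsP; exists (vR (pair_card ab)).
    rewrite /Hadj /= in_set2 eqxx /= walkS; apply/existsP; exists (vL b).
    by rewrite /Hadj /= in_set2 eqxx orbT walk1 /Hadj /=.
  move=> [|[|[|[|i]]]] // _; try by apply: nopar.
  rewrite walkS; apply/existsP => -[z /andP[]].
  case: z => [[c|C] hz]; rewrite /Hadj /= ?andbF // => cA.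
  rewrite walk1 /Hadj /= => cB.
  by move/negbT/existsPn: dis => /(_ c); rewrite cA cB.
Qed.

Definition Q1 n (Q : {set Hv n}) : {set 'I_n} := [set r | vL r \in Q].
Definition Ed n (Q : {set Hv n}) : {set {set 'I_n}} :=
  [set A : {set 'I_n} | (#|A| == 2) && [exists v in Q, val v == inr A]].
Definition eat n (Q : {set Hv n}) r := [set A in Ed Q | r \in A].
Definition deg n (Q : {set Hv n}) r := #|eat Q r|.
Definition leaf n (Q : {set Hv n}) r := (r \notin Q1 Q) && (deg Q r == 1).
Definition unt n (Q : {set Hv n}) r := (r \notin Q1 Q) && (deg Q r == 0).
Definition cw n (Q : {set Hv n}) r (A : {set 'I_n}) :=
  if leaf Q r then 4 else if [exists s in A, (s != r) && leaf Q s] then 2 else 3.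
Definition w n (Q : {set Hv n}) r := 6 * (r \in Q1 Q) + \sum_(A in eat Q r) cw Q r A.

Definition resD n (Q : {set Hv n}) :=
  forall x y : Hv n, x != y -> exists2 q, q \in Q & D x q != D y q.

Lemma res_D n (Q : {set Hv n}) : 5 <= n -> resolving (@Hadj n) Q -> resD Q.
Proof.
move=> n5 /forallP H x y xy.
move/forallP: (H x) => /(_ y) /implyP /(_ xy) /existsP [q /andP[qQ]].
by rewrite !gdistE //; exists q.
Qed.

Lemma inQ n (Q : {set Hv n}) q : q \in Q ->
  match val q with inl s => s \in Q1 Q | inr B => B \in Ed Q end.
Proof.
case: q => [[s|B] h] qQ /=.
  by rewrite inE; have -> : vL s = exist _ (inl s) h by apply: val_inj.
by rewrite inE; apply/andP; split=> //; apply/existsP; exists (exist _ (inr B) h); rewrite qQ eqxx.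
Qed.

Lemma Ed2 n (Q : {set Hv n}) A : A \in Ed Q -> #|A| == 2.
Proof. by rewrite inE => /andP[]. Qed.

Lemma in_eat n (Q : {set Hv n}) r A : (A \in eat Q r) = (A \in Ed Q) && (r \in A).
Proof. by rewrite inE. Qed.

Lemma deg0_notin n (Q : {set Hv n}) r B : deg Q r = 0 -> B \in Ed Q -> r \notin B.
Proof.
move/cards0_eq => e BE; apply/negP => rB.
by have := in_set0 B; rewrite -e in_eat BE rB.
Qed.

Lemma leaf_uniq n (Q : {set Hv n}) r B0 B : leaf Q r -> B0 \in Ed Q -> r \in B0 ->
  B \in Ed Q -> r \in B -> B = B0.
Proof.
case/andP => _ /cards1P [A e] B0E rB0 BE rB.
have : B0 \in eat Q r by rewrite in_eat B0E.
have : B \in eat Q r by rewrite in_eat BE.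
by rewrite e !inE => /eqP -> /eqP ->.
Qed.

Lemma pairE2 n (A : {set 'I_n}) x y : #|A| == 2 -> x \in A -> y \in A -> x != y ->
  A = [set x; y].
Proof.
move=> h xA yA xy; apply/eqP; rewrite eq_sym eqEcard cards2 xy (eqP h) andbT.
by apply/subsetP => z; rewrite in_set2 => /orP[]/eqP->.
Qed.

Lemma meet2 n (a b : 'I_n) (B : {set 'I_n}) :
  [exists z, (z \in [set a; b]) && (z \in B)] = (a \in B) || (b \in B).
Proof.
apply/existsP/orP => [[z]|[aB|bB]].
- by rewrite in_set2 => /andP[/orP[]/eqP-> ->]; [left|right].
- by exists a; rewrite in_set2 eqxx aB.
- by exists b; rewrite in_set2 eqxx orbT bB.
Qed.

Lemma neqQ1 n (Q : {set Hv n}) r s : r \notin Q1 Q -> s \in Q1 Q -> (r == s) = false.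
Proof. by move=> rQ sQ; apply/negbTE; apply: contraNneq rQ => ->. Qed.

Lemma F1 n (Q : {set Hv n}) u1 u2 : resD Q -> unt Q u1 -> unt Q u2 -> u1 = u2.
Proof.
move=> res /andP[q1 /eqP d1] /andP[q2 /eqP d2].
apply/eqP/negPn/negP => ne.
have [q qQ] := res (vL u1) (vL u2) (contra (fun e => introT eqP (vL_inj (eqP e))) ne).
have := inQ qQ; rewrite /D /=; case: (val q) => [s sQ|B BE].
  by rewrite (neqQ1 q1 sQ) (neqQ1 q2 sQ).
by rewrite (negbTE (deg0_notin d1 BE)) (negbTE (deg0_notin d2 BE)).
Qed.

Lemma F2 n (Q : {set Hv n}) A x y : resD Q -> A \in Ed Q -> x \in A -> y \in A -> x != y ->
  leaf Q x -> leaf Q y -> False.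
Proof.
move=> res AE xA yA xy lx ly.
have [q qQ] := res (vL x) (vL y) (contra (fun e => introT eqP (vL_inj (eqP e))) xy).
have := inQ qQ; rewrite /D /=; case: (val q) => [s sQ|B BE].
  by rewrite (neqQ1 (proj1 (andP lx)) sQ) (neqQ1 (proj1 (andP ly)) sQ).
have -> : (x \in B) = (y \in B).
  apply/idP/idP => h.
    by rewrite (leaf_uniq lx AE xA BE h).
  by rewrite (leaf_uniq ly AE yA BE h).
by rewrite eqxx.
Qed.

Lemma F3 n (Q : {set Hv n}) u b A1 A2 l c : resD Q -> unt Q u -> b \notin Q1 Q ->
  eat Q b = [set A1; A2] -> A1 != A2 -> l \in A1 -> l != b -> leaf Q l ->
  c \in A2 -> c != b -> leaf Q c -> False.
Proof.
move=> res /andP[uQ /eqP du] bQ eb A12 lA1 lb ll cA2 cb lc.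
have A1e : A1 \in eat Q b by rewrite eb in_set2 eqxx.
have A2e : A2 \in eat Q b by rewrite eb in_set2 eqxx orbT.
move: (A1e) (A2e); rewrite !in_eat => /andP[A1E bA1] /andP[A2E bA2].
have lnc : l != c.
  apply: contraNneq A12 => elc.
  have lA2 : l \in A2 by rewrite elc.
  by rewrite -(leaf_uniq ll A2E lA2 A1E lA1).
have bnu : b != u.
  by apply: contraNneq (deg0_notin du A1E) => <-.
pose x := vR (pair_card lnc); pose y := vR (pair_card bnu).
have xy : x != y.
  apply/negP => /eqP /(congr1 val) [] /setP /(_ l).
  rewrite !in_set2 eqxx /= (negbTE lb) /= => /esym /eqP elu.
  by move: (deg0_notin du A1E); rewrite -elu lA1.
have [q qQ] := res x y xy.
have := inQ qQ; rewrite /D /=; case: (val q) => [s sQ|B BE].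
  rewrite !in_set2.
  have -> : (s == l) = false by rewrite eq_sym (neqQ1 (proj1 (andP ll)) sQ).
  have -> : (s == c) = false by rewrite eq_sym (neqQ1 (proj1 (andP lc)) sQ).
  have -> : (s == b) = false by rewrite eq_sym (neqQ1 bQ sQ).
  by have -> : (s == u) = false by rewrite eq_sym (neqQ1 uQ sQ).
have -> : ([set l; c] == B) = false.
  apply/negbTE/negP => /eqP eB.
  have lB : l \in B by rewrite -eB in_set2 eqxx.
  have cB : c \in B by rewrite -eB in_set2 eqxx orbT.
  have e1 := leaf_uniq ll A1E lA1 BE lB.
  have e2 := leaf_uniq lc A2E cA2 BE cB.
  by move: A12; rewrite -e1 -e2 eqxx.
have -> : ([set b; u] == B) = false.
  apply/negbTE/negP => /eqP eB.
  by move: (deg0_notin du BE); rewrite -eB in_set2 eqxx orbT.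
rewrite !meet2 (negbTE (deg0_notin du BE)) orbF.
have -> : (l \in B) || (c \in B) = (b \in B).
  apply/idP/idP => [/orP[h|h]|h].
  - by rewrite (leaf_uniq ll A1E lA1 BE h).
  - by rewrite (leaf_uniq lc A2E cA2 BE h).
  have : B \in eat Q b by rewrite in_eat BE h.
  by rewrite eb in_set2 => /orP[]/eqP->; rewrite ?lA1 ?cA2 ?orbT.
by rewrite eqxx.
Qed.

Lemma sum_exch n (Q : {set Hv n}) (P : pred 'I_n) (F : 'I_n -> {set 'I_n} -> nat) :
  \sum_(r | P r) \sum_(A in eat Q r) F r A = \sum_(A in Ed Q) \sum_(r in A | P r) F r A.
Proof.
rewrite big_mkcond /=.
rewrite (eq_bigr (fun r => \sum_A (if P r && (A \in eat Q r) then F r A else 0))); last first.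
  move=> r _; case: (P r) => /=; first by rewrite big_mkcond.
  by rewrite big1.
rewrite exchange_big /= [RHS]big_mkcond /=; apply: eq_bigr => A _.
case: ifP => AE.
  rewrite [RHS]big_mkcond /=; apply: eq_bigr => r _.
  by rewrite in_eat AE /= andbC.
by apply: big1 => r _; rewrite in_eat AE andbF.
Qed.

Lemma sum_cw n (Q : {set Hv n}) A : resD Q -> A \in Ed Q -> \sum_(r in A) cw Q r A = 6.
Proof.
move=> res AE; case/cards2P: (Ed2 AE) => x [y [xy eA]].
have ex : forall a b : 'I_n, a != b ->
  [exists s in [set a; b], (s != a) && leaf Q s] = leaf Q b.
  move=> a b ab; apply/existsP/idP => [[s]|lb].
    by rewrite in_set2 => /andP[/orP[]/eqP-> /andP[] //]; rewrite eqxx.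
  by exists b; rewrite in_set2 eqxx orbT eq_sym ab.
have hx := ex x y xy.
have hy : [exists s in [set x; y], (s != y) && leaf Q s] = leaf Q x.
  by rewrite setUC; apply: ex; rewrite eq_sym.
rewrite eA big_setU1 ?in_set1 // big_set1 /cw hx hy.
have xA : x \in A by rewrite eA in_set2 eqxx.
have yA : y \in A by rewrite eA in_set2 eqxx orbT.
have F := F2 res AE xA yA xy.
by move: F; case: (leaf Q x); case: (leaf Q y) => // /(_ isT isT).
Qed.

Lemma sum_w n (Q : {set Hv n}) : resD Q -> \sum_r w Q r = 6 * #|Q1 Q| + 6 * #|Ed Q|.
Proof.
move=> res; rewrite big_split /= -big_distrr /=.
have -> : \sum_r ((r \in Q1 Q) : nat) = #|Q1 Q|.
  by rewrite -sum1_card [RHS]big_mkcond; apply: eq_bigr => r _; case: (r \in Q1 Q).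
congr (_ + _).
have := sum_exch Q xpredT (@cw n Q); rewrite /= => ->.
rewrite (eq_bigr (fun _ => 6)); first by rewrite sum_nat_const mulnC.
move=> A AE; rewrite -(sum_cw res AE); apply: eq_bigl => r; by rewrite andbT.
Qed.

Definition projR n (v : Hv n) : {set 'I_n} := if val v is inr A then A else set0.

Lemma card_Q n (Q : {set Hv n}) : #|Q1 Q| + #|Ed Q| <= #|Q|.
Proof.
rewrite -(cardsID [set v | isR v] Q) [X in _ <= X]addnC; apply: leq_add; last first.
  have sub : Ed Q \subset (@projR n) @: (Q :&: [set v | isR v]).
    apply/subsetP => A; rewrite inE => /andP[_ /existsP[v /andP[vQ /eqP vA]]].
    by apply/imsetP; exists v; rewrite ?inE ?vQ /isR ?vA // /projR vA.
  exact: leq_trans (subset_leq_card sub) (leq_imset_card _ _).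
have -> : #|Q1 Q| = #|(@vL n) @: Q1 Q| by rewrite card_imset //; apply: vL_inj.
apply: subset_leq_card; apply/subsetP => v /imsetP[r]; rewrite inE => rQ ->.
by rewrite !inE rQ.
Qed.

Lemma w_ge n (Q : {set Hv n}) b : ~~ leaf Q b -> 2 * deg Q b + 6 * (b \in Q1 Q) <= w Q b.
Proof.
move=> nl; rewrite /w addnC leq_add2l.
have H : \sum_(A in eat Q b) 2 <= \sum_(A in eat Q b) cw Q b A.
  by apply: leq_sum => A _; rewrite /cw (negbTE nl); case: ifP.
by apply: leq_trans H; rewrite sum_nat_const mulnC.
Qed.

Definition mid n (Q : {set Hv n}) r := ~~ leaf Q r && ~~ unt Q r.

Lemma mid_deg n (Q : {set Hv n}) b : mid Q b -> b \notin Q1 Q -> 2 <= deg Q b.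
Proof.
rewrite /mid /leaf /unt => /andP[]; case: (b \in Q1 Q) => //= h1 h2 _.
by move: h1 h2; case: (deg Q b) => [|[|d]].
Qed.

Lemma w_mid4 n (Q : {set Hv n}) b : mid Q b -> 4 <= w Q b.
Proof.
move=> m; have := w_ge (proj1 (andP m)).
case: (boolP (b \in Q1 Q)) => bQ /=; first by lia.
by have := mid_deg m bQ; lia.
Qed.

Lemma w_mid5 n (Q : {set Hv n}) u b : resD Q -> unt Q u -> mid Q b ->
  5 <= w Q b /\ deg Q b + 3 <= w Q b.
Proof.
move=> res uu m; have nl := proj1 (andP m); have := w_ge nl.
case: (boolP (b \in Q1 Q)) => bQ /=; first by lia.
have d2 := mid_deg m bQ.
case: (ltngtP (deg Q b) 2) => [|d3|d2e]; first by lia.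
  by lia.
suff : 5 <= w Q b by lia.
have /cards2P [A1 [A2 [A12 eb]]] : #|eat Q b| == 2 by rewrite -/(deg Q b) d2e.
rewrite /w (negbTE bQ) /= eb big_setU1 ?in_set1 // big_set1 /cw (negbTE nl).
case: ifP => [/existsP[l /andP[lA1 /andP[lb ll]]]|]; last by case: ifP.
case: ifP => [/existsP[c /andP[cA2 /andP[cb lc]]]|] //.
by case: (F3 res uu bQ eb A12 lA1 lb ll cA2 cb lc).
Qed.

Lemma part n (Q : {set Hv n}) (F : 'I_n -> nat) :
  \sum_r F r = \sum_(r | leaf Q r) F r + \sum_(r | unt Q r) F r + \sum_(r | mid Q r) F r.
Proof.
rewrite (bigID (leaf Q)) /= -addnA; congr (_ + _).
rewrite (bigID (unt Q)) /=; congr (_ + _).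
apply: eq_bigl => r; rewrite /leaf /unt.
by case: (r \in Q1 Q); case: (deg Q r) => [|[|]].
Qed.

Lemma sum1n n : \sum_(r < n) 1 = n.
Proof. by rewrite sum1_card card_ord. Qed.

Lemma deg_sum n (Q : {set Hv n}) : \sum_r deg Q r = 2 * #|Ed Q|.
Proof.
rewrite (eq_bigr (fun r => \sum_(A in eat Q r) 1)); last by move=> r _; rewrite sum1_card.
have := sum_exch Q xpredT (fun _ _ => 1); rewrite /= => ->.
rewrite (eq_bigr (fun _ => 2)); first by rewrite sum_nat_const mulnC.
move=> A AE; rewrite -(eqP (Ed2 AE)) -sum1_card; apply: eq_bigl => r; by rewrite andbT.
Qed.

Lemma nL_le n (Q : {set Hv n}) : resD Q -> \sum_(r | leaf Q r) 1 <= #|Ed Q|.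
Proof.
move=> res.
rewrite (eq_bigr (fun r => \sum_(A in eat Q r) 1)); last first.
  by move=> r /andP[_ /eqP d]; rewrite sum1_card.
rewrite sum_exch -sum1_card; apply: leq_sum => A AE.
case/cards2P: (Ed2 AE) => x [y [xy eA]].
have xA : x \in A by rewrite eA in_set2 eqxx.
have yA : y \in A by rewrite eA in_set2 eqxx orbT.
have F := F2 res AE xA yA xy.
rewrite big_mkcondr /= eA big_setU1 ?in_set1 // big_set1.
by move: F; case: (leaf Q x); case: (leaf Q y) => // /(_ isT isT).
Qed.

Lemma w_leaf n (Q : {set Hv n}) b : leaf Q b -> w Q b = 4.
Proof.
move=> lb; have /andP[bQ /cards1P[A e]] := lb.
by rewrite /w (negbTE bQ) e big_set1 /cw lb.
Qed.

Lemma lower n (Q : {set Hv n}) k : resD Q -> 2 <= k ->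
  (n = 3 * k + 1 -> 2 * k + 1 <= #|Q|) /\ (n = 3 * k + 2 -> 2 * k + 2 <= #|Q|).
Proof.
move=> res k2.
have c := card_Q Q. have sw := sum_w res.
have hp := part Q (w Q). have hdp := part Q (deg Q).
have hn := part Q (fun _ => 1); rewrite sum1n in hn.
have ds := deg_sum Q. have nl := nL_le res.
have wl : 4 * \sum_(r | leaf Q r) 1 <= \sum_(r | leaf Q r) w Q r.
  by rewrite big_distrr /=; apply: leq_sum => r lr; rewrite w_leaf.
have dl : \sum_(r | leaf Q r) deg Q r = \sum_(r | leaf Q r) 1.
  by apply: eq_bigr => r /andP[_ /eqP].
have du : \sum_(r | unt Q r) deg Q r = 0.
  by apply: big1 => r /andP[_ /eqP].
have wm4 : 4 * \sum_(r | mid Q r) 1 <= \sum_(r | mid Q r) w Q r.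
  by rewrite big_distrr /=; apply: leq_sum => r mr; rewrite muln1 w_mid4.
case: (boolP [exists u, unt Q u]) => [/existsP[u uu]|nu].
  have nU : \sum_(r | unt Q r) 1 = 1.
    rewrite (big_pred1 u) // => r /=; apply/idP/eqP => [ur|->//].
    exact: F1 res ur uu.
  have wm5 : 5 * \sum_(r | mid Q r) 1 <= \sum_(r | mid Q r) w Q r.
    rewrite big_distrr /=; apply: leq_sum => r mr; rewrite muln1.
    by case: (w_mid5 res uu mr).
  have wmd : \sum_(r | mid Q r) deg Q r + 3 * \sum_(r | mid Q r) 1 <= \sum_(r | mid Q r) w Q r.
    rewrite big_distrr -big_split /=; apply: leq_sum => r mr; rewrite muln1.
    by case: (w_mid5 res uu mr).
  split=> hk; rewrite sw in hp; rewrite ds in hdp; lia.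
have nU : \sum_(r | unt Q r) 1 = 0.
  apply: big_pred0 => r /=; apply/negP => ur.
  by move/existsPn: nu => /(_ r); rewrite ur.
by split=> hk; rewrite sw in hp; rewrite ds in hdp; lia.
Qed.

Lemma D_res n (Q : {set Hv n}) : 5 <= n -> resD Q -> resolving (@Hadj n) Q.
Proof.
move=> n5 res; apply/forallP => x; apply/forallP => y; apply/implyP => xy.
have [q qQ dq] := res x y xy; apply/existsP; exists q; by rewrite qQ !gdistE.
Qed.

Lemma resD_T n : resD [set: Hv n].
Proof.
move=> x y xy; exists x; rewrite ?inE //.
case: x y xy => [[r|A] hx] [[s|B] hy] xy; rewrite /D /= eqxx; try by case: ifP.
- by case: (s =P r) => // e; move: xy; subst; rewrite (bool_irrelevance hx hy) eqxx.
- by case: (B =P A) => [e|]; [move: xy; subst; rewrite (bool_irrelevance hx hy) eqxx | case: ifP].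
Qed.

Lemma md_le (T : finType) (e : rel T) (Q : {set T}) : resolving e Q -> metric_dim e <= #|Q|.
Proof.
move=> rQ; rewrite /metric_dim leqNgt; apply/negP => lt.
have := before_find 0 lt; rewrite nth_iota ?add0n ?ltnS ?max_card //.
by move/negbT/existsPn => /(_ Q); rewrite rQ eqxx.
Qed.

Lemma md_ge (T : finType) (e : rel T) m (Q0 : {set T}) : resolving e Q0 ->
  (forall Q : {set T}, resolving e Q -> m <= #|Q|) -> m <= metric_dim e.
Proof.
move=> r0 H; rewrite /metric_dim.
set P := fun k => _.
have hP : has P (iota 0 #|T|.+1).
  apply/hasP; exists #|Q0|; first by rewrite mem_iota add0n ltnS max_card.
  by apply/existsP; exists Q0; rewrite r0 eqxx.
have := nth_find 0 hP; rewrite nth_iota ?add0n; last by move: hP; rewrite has_find size_iota.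
by case/existsP => Q /andP[rQ /eqP <-]; apply: H.
Qed.

Definition sg (p : nat) (b : bool) := if b then (p == 1) || (p == 2) else (p == 0) || (p == 1).
Definition ed n k (i : nat) (b : bool) : {set 'I_n} :=
  [set r : 'I_n | (r < 3 * k) && (r %/ 3 == i) && sg (r %% 3) b].
Definition notE n k (A : {set 'I_n}) := ~~ [exists i : 'I_k, exists b, A == ed n k i b].
Definition meet n (X Y : {set 'I_n}) := [exists c, (c \in X) && (c \in Y)].

Lemma in_ed n k i b (r : 'I_n) :
  (r \in ed n k i b) = (r < 3 * k) && (r %/ 3 == i) && sg (r %% 3) b.
Proof. by rewrite inE. Qed.

Lemma elt_eq n (x y : 'I_n) : x %/ 3 = y %/ 3 -> x %% 3 = y %% 3 -> x = y.
Proof. by move=> h1 h2; apply: val_inj; rewrite /= (divn_eq x 3) (divn_eq y 3) h1 h2. Qed.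

Lemma pos3 (r : nat) : r %% 3 < 3.
Proof. exact: ltn_pmod. Qed.

Lemma sg_self p : p < 3 -> sg p (p == 2).
Proof. by case: p => [|[|[|]]]. Qed.

Lemma blk_lt k (r : nat) : r < 3 * k -> r %/ 3 < k.
Proof. by rewrite ltn_divLR // mulnC. Qed.

Lemma edge_of n k (w v : 'I_n) : w < 3 * k -> v < 3 * k -> w %/ 3 = v %/ 3 ->
  w %% 3 = 1 -> v %% 3 != 1 -> ed n k (w %/ 3) (v %% 3 == 2) = [set w; v].
Proof.
move=> wl vl bwv pw pv; apply/setP => r; rewrite in_ed in_set2.
apply/idP/idP.
  case/andP => /andP[rl /eqP rb] sr.
  have : (r %% 3 == 1) || (r %% 3 == v %% 3).
    move: sr pv (pos3 r) (pos3 v).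
    by case: (r %% 3) => [|[|[|p]]]; case: (v %% 3) => [|[|[|q]]].
  case/orP => /eqP pr.
    by rewrite (elt_eq rb (etrans pr (esym pw))) eqxx.
  by rewrite (elt_eq (etrans rb bwv) pr) eqxx orbT.
case/orP => /eqP ->.
  by rewrite wl eqxx pw /=; case: (_ == 2).
by rewrite vl bwv eqxx sg_self ?pos3.
Qed.

Lemma divmod3 i t : t < 3 -> (3 * i + t) %/ 3 = i /\ (3 * i + t) %% 3 = t.
Proof. by move=> ht; rewrite mulnC divnMDl // divn_small // addn0 modnMDl modn_small. Qed.

Lemma card_ed n k i b : 3 * k < n -> i < k -> #|ed n k i b| == 2.
Proof.
move=> kn ik.
have key : forall t, t < 3 -> t != 1 -> #|ed n k i (t == 2)| == 2.
  move=> t t3 t1.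
  have hw : 3 * i + 1 < n by lia.
  have ht : 3 * i + t < n by lia.
  pose w := Ordinal hw; pose v := Ordinal ht.
  have [bw pw] := divmod3 i (isT : 1 < 3).
  have [bv pv] := divmod3 i t3.
  have wl : w < 3 * k by rewrite /=; lia.
  have vl : v < 3 * k by rewrite /=; lia.
  have := @edge_of n k w v wl vl; rewrite /= bw bv pw pv => /(_ erefl erefl t1) ->.
  have wv : w != v.
    apply/eqP => /(congr1 val) /= e.
    by move: pv; rewrite -e pw => e1; move: t1; rewrite -e1.
  by rewrite cards2 wv.
by case: b; [apply: (key 2) | apply: (key 0)].
Qed.

Lemma vdist n k (r s : 'I_n) : r < 3 * k -> s < 3 * k -> r != s ->
  exists i b, i < k /\ (r \in ed n k i b) != (s \in ed n k i b).
Proof.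
move=> rl sl rs.
case: (eqVneq (r %/ 3) (s %/ 3)) => [e|ne].
  have pn : r %% 3 != s %% 3.
    by apply: contra rs => /eqP p; apply/eqP; exact: elt_eq e p.
  exists (r %/ 3), ((r %% 3 + s %% 3) == 1); split; first exact: blk_lt.
  rewrite !in_ed rl sl e eqxx /=.
  move: pn (pos3 r) (pos3 s).
  by case: (r %% 3) => [|[|[|p]]]; case: (s %% 3) => [|[|[|q]]].
exists (r %/ 3), (r %% 3 == 2); split; first exact: blk_lt.
have ne' : (s %/ 3 == r %/ 3) = false by rewrite eq_sym (negbTE ne).
by rewrite !in_ed rl sl eqxx sg_self ?pos3 // ne' andbF.
Qed.

Definition good n k (X Y : {set 'I_n}) :=
  #|X| == 2 /\ #|Y| == 2 /\ notE k X /\ notE k Y /\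
     (forall z : 'I_n, 3 * k <= z -> (z \in X) = (z \in Y)) /\
     (forall i b, i < k -> meet X (ed n k i b) = meet Y (ed n k i b)).

Lemma good_sym n k (X Y : {set 'I_n}) : good k X Y -> good k Y X.
Proof.
case=> h1 [h2 [h3 [h4 [h5 h6]]]]; do 5 split=> //.
  by move=> z zk; rewrite h5.
by move=> i b ik; rewrite h6.
Qed.

Lemma isEdge n k (X : {set 'I_n}) (w v : 'I_n) : #|X| == 2 -> notE k X ->
  w \in X -> v \in X -> w < 3 * k -> v < 3 * k -> w %/ 3 = v %/ 3 ->
  w %% 3 = 1 -> v %% 3 != 1 -> False.
Proof.
move=> X2 nX wX vX wl vl b pw pv.
have e := edge_of wl vl b pw pv.
have wv : w != v by apply: contra pv => /eqP <-; rewrite pw.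
have eX := pairE2 X2 wX vX wv.
move/existsP: nX; apply; exists (Ordinal (blk_lt wl)); apply/existsP.
by exists (v %% 3 == 2); rewrite /= e eX.
Qed.

Lemma meet_in n (X E : {set 'I_n}) x : x \in X -> x \in E -> meet X E.
Proof. by move=> h1 h2; apply/existsP; exists x; rewrite h1 h2. Qed.

Lemma S1 n k (X Y : {set 'I_n}) x : good k X Y -> x \in X -> x \notin Y ->
  x < 3 * k -> x %% 3 = 1 ->
  forall z, z \in Y -> [/\ z < 3 * k, z %/ 3 = x %/ 3 & z %% 3 != 1].
Proof.
case=> X2 [Y2 [nX [nY [QA H]]]] xX xY xl px.
have ik := blk_lt xl.
have hyp : forall b, exists2 y, y \in Y & [/\ y < 3 * k, y %/ 3 = x %/ 3, y %% 3 != 1 & sg (y %% 3) b].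
  move=> b; have := H (x %/ 3) b ik.
  rewrite (meet_in xX (_ : x \in ed n k (x %/ 3) b)); last by rewrite in_ed xl eqxx px; case: b.
  case/esym/existsP => y /andP[yY]; rewrite in_ed => /andP[/andP[yl /eqP yb] sy].
  exists y => //; split=> //; apply: contraNneq xY => py.
  by rewrite -(elt_eq yb (etrans py (esym px))).
have [y yY [yl yb py sy]] := hyp false.
have [y' y'Y [y'l y'b py' sy']] := hyp true.
have yy' : y != y'.
  apply/eqP => e; move: sy sy' py py'; rewrite -e.
  by case: (y %% 3) => [|[|[|]]].
have eY := pairE2 Y2 yY y'Y yy'.
by move=> z; rewrite eY in_set2 => /orP[]/eqP->.
Qed.

Lemma S2 n k (X Y : {set 'I_n}) x : good k X Y -> x \in X -> x \notin Y ->
  x < 3 * k -> x %% 3 != 1 ->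
  exists y, [/\ y \in Y, y \notin X, y < 3 * k, y %/ 3 = x %/ 3 & y %% 3 = 1].
Proof.
case=> X2 [Y2 [nX [nY [QA H]]]] xX xY xl px.
have ik := blk_lt xl.
have := H (x %/ 3) (x %% 3 == 2) ik.
rewrite (meet_in xX (_ : x \in ed n k (x %/ 3) (x %% 3 == 2))); last first.
  by rewrite in_ed xl eqxx sg_self ?pos3.
case/esym/existsP => y /andP[yY]; rewrite in_ed => /andP[/andP[yl /eqP yb] sy].
have py : y %% 3 = 1.
  apply/eqP; apply/negP => py.
  have e : y %% 3 = x %% 3.
    move: sy py px (pos3 x) (pos3 y).
    by case: (x %% 3) => [|[|[|]]]; case: (y %% 3) => [|[|[|]]].
  by move: xY; rewrite -(elt_eq yb e) yY.
exists y; split=> //.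
apply/negP => yX.
exact: (isEdge X2 nX yX xX yl xl (esym (esym yb)) py px).
Qed.

Lemma S3 n k (X Y : {set 'I_n}) w : good k X Y -> w \in X -> w < 3 * k -> w %% 3 = 1 ->
  (forall z, z \in Y -> [/\ z < 3 * k, z %/ 3 = w %/ 3 & z %% 3 != 1]) -> False.
Proof.
case=> X2 [Y2 [nX [nY [QA H]]]] wX wl pw PY.
have [v vX vw] : exists2 v : 'I_n, v \in X & v != w.
  case/cards2P: (X2) => a [b [ab eX]].
  case: (eqVneq w a) => [->|wa]; [exists b | exists a]; rewrite ?eX ?in_set2 ?eqxx ?orbT //.
  all: try by rewrite eq_sym.
have vY : v \notin Y.
  apply/negP => /PY [vl vb pv].
  exact: (isEdge X2 nX wX vX wl vl (esym vb) pw pv).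
have vl : v < 3 * k.
  rewrite ltnNge; apply/negP => /QA e; by move: vY; rewrite -e vX.
have bvw : v %/ 3 != w %/ 3.
  apply/negP => /eqP vb.
  have pv : v %% 3 != 1.
    by apply: contra vw => /eqP pv; apply/eqP; apply: elt_eq vb (etrans pv (esym pw)).
  exact: (isEdge X2 nX wX vX wl vl (esym vb) pw pv).
have := H (v %/ 3) (v %% 3 == 2) (blk_lt vl).
rewrite (meet_in vX (_ : v \in ed n k (v %/ 3) (v %% 3 == 2))); last first.
  by rewrite in_ed vl eqxx sg_self ?pos3.
case/esym/existsP => z /andP[/PY [zl zb pz]]; rewrite in_ed => /andP[/andP[_ /eqP zb'] _].
by move: bvw; rewrite -zb' zb eqxx.
Qed.

Lemma pair_core n k (A B : {set 'I_n}) : good k A B -> A != B -> False.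
Proof.
move=> g AB; have g' := good_sym g.
case: (g) => A2 [B2 [_ [_ [QA _]]]].
have [x xA xB] : exists2 x, x \in A & x \notin B.
  apply/subsetPn; apply: contra AB => sub.
  by rewrite eqEcard sub (eqP A2) (eqP B2).
have xl : x < 3 * k.
  rewrite ltnNge; apply/negP => /QA e; by move: xB; rewrite -e xA.
case: (eqVneq (x %% 3) 1) => px.
  exact: (S3 g xA xl px (S1 g xA xB xl px)).
have [y [yB yA yl yb py]] := S2 g xA xB xl px.
exact: (S3 g' yB yl py (S1 g' yB yA yl py)).
Qed.

Definition Qc n k : {set Hv n} :=
  [set v : Hv n | match val v with
                  | inl r => 3 * k <= r
                  | inr A => [exists i : 'I_k, exists b : bool, A == ed n k i b] end].

Lemma resD_Qc n k : 3 * k < n -> resD (Qc n k).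
Proof.
move=> kn x y xy.
pose z0 : 'I_n := Ordinal kn.
have z0Q : vL z0 \in Qc n k by rewrite inE /=.
have evQ : forall i b (ik : i < k), vR (card_ed b kn ik) \in Qc n k.
  move=> i b ik; rewrite inE /=; apply/existsP; exists (Ordinal ik).
  by apply/existsP; exists b.
case: x y xy => [[r|A] hx] [[s|B] hy] xy.
- have rs : r != s.
    by apply: contra xy => /eqP e; subst; rewrite (bool_irrelevance hx hy).
  case: (leqP (3 * k) r) => rh.
    exists (vL r); first by rewrite inE.
    by rewrite /D /= eqxx (_ : (s == r) = false) // eq_sym (negbTE rs).
  case: (leqP (3 * k) s) => sh.
    exists (vL s); first by rewrite inE.
    by rewrite /D /= eqxx (negbTE rs).
  have [i [b [ik dif]]] := vdist rh sh rs.
  exists (vR (card_ed b kn ik)); first exact: evQ.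
  by rewrite /D /=; move: dif; case: (r \in ed n k i b); case: (s \in ed n k i b).
- by exists (vL z0) => //; rewrite /D /=; case: ifP; case: ifP.
- by exists (vL z0) => //; rewrite /D /=; case: ifP; case: ifP.
have AB : A != B.
  by apply: contra xy => /eqP e; subst; rewrite (bool_irrelevance hx hy).
case: (boolP [exists i : 'I_k, exists b : bool, A == ed n k i b]) => EA.
  exists (exist _ (inr A) hx); first by rewrite inE.
  rewrite /D /= eqxx (_ : (B == A) = false); last by rewrite eq_sym (negbTE AB).
  by case: ifP.
case: (boolP [exists i : 'I_k, exists b : bool, B == ed n k i b]) => EB.
  exists (exist _ (inr B) hy); first by rewrite inE.
  rewrite /D /= eqxx (negbTE AB).
  by case: ifP.
case: (boolP [exists z : 'I_n, (3 * k <= z) && ((z \in A) != (z \in B))]) => EZ.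
  case/existsP: EZ => z /andP[zh dz].
  exists (vL z); first by rewrite inE.
  by rewrite /D /=; move: dz; case: (z \in A); case: (z \in B).
case: (boolP [exists i : 'I_k, exists b : bool,
               meet A (ed n k i b) != meet B (ed n k i b)]) => EM.
  case/existsP: EM => i /existsP [b dm].
  exists (vR (card_ed b kn (ltn_ord i))); first exact: evQ.
  rewrite /D /=.
  have -> : (A == ed n k i b) = false.
    apply/negbTE; apply: contra EA => e; apply/existsP; exists i; apply/existsP; by exists b.
  have -> : (B == ed n k i b) = false.
    apply/negbTE; apply: contra EB => e; apply/existsP; exists i; apply/existsP; by exists b.
  by move: dm; rewrite /meet; case: [exists c, _]; case: [exists c, _].
exfalso; apply: (@pair_core n k A B) AB.
split; first exact: hx. split; first exact: hy.
split; first exact: EA. split; first exact: EB. split.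
  move=> z zh; apply/eqP; move: EZ; apply: contraNT => dz.
  by apply/existsP; exists z; rewrite zh dz.
move=> i b ik.
case: (eqVneq (meet A (ed n k i b)) (meet B (ed n k i b))) => // dm.
exfalso; move/negP: EM; apply.
by apply/existsP; exists (Ordinal ik); apply/existsP; exists b.
Qed.

Lemma card_Qc n k : 3 * k < n -> #|Qc n k| <= (n - 3 * k) + 2 * k.
Proof.
move=> kn.
pose v0 := vL (Ordinal kn).
pose g := fun p : 'I_k * bool => insubd v0 (inr (ed n k p.1 p.2) : 'I_n + {set 'I_n}).
pose hi := [set r : 'I_n | 3 * k <= r].
have sub : Qc n k \subset (@vL n @: hi) :|: (g @: [set: 'I_k * bool]).
  apply/subsetP => v; rewrite inE; case: v => [[r|A] h] /=.
    move=> rh; apply/setUP; left; apply/imsetP; exists r; first by rewrite inE.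
    exact: val_inj.
  case/existsP => i /existsP [b /eqP eA]; apply/setUP; right; apply/imsetP.
  exists (i, b); first by rewrite inE.
  apply: val_inj; rewrite /g /= insubdK ?eA //; exact: card_ed.
apply: (leq_trans (subset_leq_card sub)).
rewrite cardsU; apply: (leq_trans (leq_subr _ _)).
apply: leq_add; last first.
  by apply: (leq_trans (leq_imset_card _ _)); rewrite cardsT card_prod card_ord card_bool muln2 -addnn; lia.
apply: (leq_trans (leq_imset_card _ _)).
have hc := cardsC hi; rewrite card_ord in hc.
suff : 3 * k <= #|~: hi| by lia.
have le : 3 * k <= n by lia.
have sub2 : [set widen_ord le i | i in 'I_(3 * k)] \subset ~: hi.
  apply/subsetP => r /imsetP [i _ ->]; rewrite !inE /= -ltnNge; exact: ltn_ord.
apply: (leq_trans _ (subset_leq_card sub2)).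
rewrite card_imset ?card_ord //.
by move=> a b /(congr1 val) /= e; apply: val_inj.
Qed.

Lemma beta_lo N k : 2 <= k -> (N = 3 * k + 1 -> 2 * k + 1 <= betaH N) /\
                               (N = 3 * k + 2 -> 2 * k + 2 <= betaH N).
Proof.
move=> k2.
have hT : forall N, 5 <= N -> resolving (@Hadj N) [set: Hv N].
  by move=> M M5; apply: D_res => //; apply: resD_T.
split=> hN; have N5 : 5 <= N by lia.
  apply: (md_ge (hT N N5)) => Q rQ.
  by case: (lower (res_D N5 rQ) k2) => + _; apply.
apply: (md_ge (hT N N5)) => Q rQ.
by case: (lower (res_D N5 rQ) k2) => _; apply.
Qed.

Lemma beta_up N k : 3 * k < N -> 5 <= N -> betaH N <= (N - 3 * k) + 2 * k.
Proof.
move=> kN N5; apply: leq_trans (md_le (D_res N5 (resD_Qc kN))) (card_Qc kN).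
Qed.

Theorem corollary3p1 (n k : nat) :
  6 <= n -> n = 3 * k ->
  2 * k < betaH (n + 1) /\ betaH (n + 1) < betaH (n + 2) /\ betaH (n + 2) <= 2 * (k + 1).
Proof.
move=> n6 nk; have k2 : 2 <= k by lia.
have [l1 _] := beta_lo (n + 1) k2.
have [_ l2] := beta_lo (n + 2) k2.
have u1 := @beta_up (n + 1) k ltac:(lia) ltac:(lia).
have u2 := @beta_up (n + 2) k ltac:(lia) ltac:(lia).
have := l1 ltac:(lia); have := l2 ltac:(lia).
lia.
Qed.
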